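(* Let $Q=(q_n)_{n\ge1}$ be a basic sequence that is infinite in limit, and suppose there exist constants $M$ and $t$ such that $\nu_{i+1}-\nu_i\le Mi$ for all $i>t$. Then $l_i\le\lceil M+1\rceil$ for all $i>t$.
   Context: A basic sequence is a sequence $Q=(q_n)_{n\ge1}$ of integers with $q_n\ge 2$; it is infinite in limit if $q_n\to\infty$. $\mathbb{N}$ denotes the positive integers. For each positive integer $j$ let $\nu_j=\min\{N : q_m\ge 2j^2 \text{ for all } m\ge N\}$. Define $l_1=\max(\nu_2-1,1)$ and, recursively for $i\ge 2$, $l_i=\max\big(\min\{k\in\mathbb{N} : l_1+2l_2+\cdots+(i-1)l_{i-1}+ik\ge \nu_{i+1}-1\},1\big)$. *)

(* Defs.v *)
From Stdlib Require Import ClassicalEpsilon.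
From mathcomp Require Import all_boot all_order all_algebra.
From mathcomp Require Import reals.
Set Implicit Arguments. Unset Strict Implicit. Unset Printing Implicit Defensive.

(* A sequence q_1, q_2, ... is modelled by q : nat -> nat (q 0 is ignored). *)
Definition basic_seq (q : nat -> nat) : Prop := forall n, 0 < n -> 2 <= q n.

Definition infinite_in_limit (q : nat -> nat) : Prop :=
  forall B, exists N, forall m, N <= m -> B <= q m.

Definition nu_spec (q : nat -> nat) (j N : nat) : Prop :=
  [/\ 0 < N, (forall m, N <= m -> 2 * j ^ 2 <= q m)
    & forall N', 0 < N' -> (forall m, N' <= m -> 2 * j ^ 2 <= q m) -> N <= N'].

(* nu_j (well-defined and satisfying nu_spec whenever such a minimum exists,
   e.g. when q is infinite in limit). *)
Definition nu (q : nat -> nat) (j : nat) : nat :=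
  epsilon (inhabits 0) (nu_spec q j).

Lemma lstep_ex (S i target : nat) :
  exists k, (0 < k) && (target <= S + i.+1 * k).
Proof.
exists target.+1; apply/andP; split => //.
apply: leq_trans (leq_addl S _).
by rewrite mulSn; apply: leq_trans (leqnSn target) (leq_addr _ _).
Qed.

Definition lstep (S i target : nat) : nat := ex_minn (lstep_ex S i target).

(* lS q n = (l_n, l_1 + 2 l_2 + ... + n l_n) for n >= 1. *)
Fixpoint lS (q : nat -> nat) (n : nat) : nat * nat :=
  match n with
  | 0 => (0, 0)
  | 1 => let l1 := maxn (nu q 2 - 1) 1 in (l1, l1)
  | (i.+1) as n' =>
      let S := (lS q i).2 in
      let li := maxn (lstep S i (nu q n'.+1 - 1)) 1 in
      (li, S + n' * li)
  end.

Definition l (q : nat -> nat) (i : nat) : nat := (lS q i).1.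

(* Main.v *)
Require Import Defs.
From Stdlib Require Import ClassicalEpsilon Classical.
From mathcomp Require Import all_boot all_order all_algebra.
From mathcomp Require Import reals.
From mathcomp Require Import zify.
Import Order.TTheory GRing.Theory Num.Theory.

Lemma classical_min (P : nat -> Prop) : (exists n, P n) ->
  exists n, P n /\ forall m, P m -> n <= m.
Proof.
move=> [n Pn].
elim: n {-2}n (leqnn n) Pn => [|k IH] n hn Pn.
  exists n; split=> // m _; move: hn; rewrite leqn0 => /eqP->//.
destruct (classic (exists m, m < n /\ P m)) as [[m [hm Pm]]|H].
  by apply: (IH m) => //; lia.
exists n; split=> // m Pm; rewrite leqNgt; apply/negP => hm; apply: H; by exists m.
Qed.

Lemma nuP q j : infinite_in_limit q -> nu_spec q j (nu q j).
Proof.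
move=> hq; rewrite /nu; apply: epsilon_spec.
have [N HN] := hq (2 * j ^ 2).
have [n [[h1 h2] h3]] := @classical_min
  (fun N' => 0 < N' /\ forall m, N' <= m -> 2 * j ^ 2 <= q m)
  (ex_intro _ N.+1 (conj (ltn0Sn N) (fun m hm => HN m (ltnW hm)))).
exists n; split=> // N' a b; exact: h3.
Qed.

Lemma nu_pos q j : infinite_in_limit q -> 0 < nu q j.
Proof. by move=> hq; case: (@nuP q j hq). Qed.

Lemma nu_mono q j : infinite_in_limit q -> nu q j <= nu q j.+1.
Proof.
move=> hq; case: (@nuP q j hq) => _ _ h3; case: (@nuP q j.+1 hq) => a b _.
apply: h3 => // m hm; apply: leq_trans (b m hm).
by rewrite leq_mul2l /= leq_exp2r.
Qed.

Lemma nu1 q : basic_seq q -> infinite_in_limit q -> nu q 1 = 1.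
Proof.
move=> hb hq; case: (@nuP q 1 hq) => a _ c.
apply/eqP; rewrite eqn_leq a andbT; apply: c => // m hm; exact: hb.
Qed.

Lemma lstepP S i T : (0 < lstep S i T) && (T <= S + i.+1 * lstep S i T).
Proof. rewrite /lstep; by case: ex_minnP. Qed.

Lemma lstep_min S i T k : (0 < k) && (T <= S + i.+1 * k) -> lstep S i T <= k.
Proof. rewrite /lstep; case: ex_minnP => m _ h; exact: h. Qed.

Lemma S_ge q n : 0 < n -> nu q n.+1 - 1 <= (lS q n).2.
Proof.
case: n => [//|[|n]] _; first by rewrite /= leq_maxl.
rewrite /=.
have /andP[h1 h2] := lstepP (lS q n.+1).2 n.+1 (nu q n.+3 - 1).
rewrite (maxn_idPl h1); exact: h2.
Qed.

Lemma key q i : basic_seq q -> infinite_in_limit q -> 0 < i ->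
  (l q i - 1) * i <= nu q i.+1 - nu q i.
Proof.
move=> hb hq; case: i => [//|[|n]] _.
  rewrite /l /= nu1 //; rewrite muln1 /maxn; case: ifP; lia.
rewrite /l /=.
set S := (lS q n.+1).2; set T := nu q n.+3 - 1.
have /andP[h1 h2] := lstepP S n.+1 T.
rewrite (maxn_idPl h1).
have hS : nu q n.+2 - 1 <= S by exact: (@S_ge q n.+1 (ltn0Sn n)).
have hp := @nu_pos q n.+2 hq.
set k := lstep S n.+1 T in h1 h2 *.
case: (ltnP 1 k) => hk; last by have -> : k - 1 = 0 by lia.
have hm : ~~ (T <= S + n.+2 * (k - 1)).
  apply/negP => hT.
  have hh : (0 < k - 1) && (T <= S + n.+2 * (k - 1)) by apply/andP; split; [lia|exact hT].
  have := @lstep_min S n.+1 T (k - 1) hh; rewrite -/k; lia.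
rewrite /T in hm; lia.
Qed.

Local Open Scope ring_scope.

Theorem mainTheorem17 (R : realType) (q : nat -> nat) (M t : R) :
  basic_seq q -> infinite_in_limit q ->
  (forall i : nat, (0 < i)%N -> t < i%:R ->
     ((nu q i.+1)%:R - (nu q i)%:R <= M * i%:R)) ->
  forall i : nat, (0 < i)%N -> t < i%:R ->
    ((l q i)%:Z <= Num.ceil (M + 1))%R.
Proof.
move=> hb hq hM i hi ht.
have hk := @key q i hb hq hi.
have hmo := @nu_mono q i hq.
have hMi := hM i hi ht.
rewrite -(natrB _ hmo) in hMi.
have h1 : ((l q i - 1)%N%:R * i%:R <= M * i%:R :> R).
  by apply: le_trans hMi; rewrite -natrM ler_nat.
have hip : (0 : R) < i%:R by rewrite ltr0n.
rewrite ler_pM2r // in h1.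
have h2 : ((l q i)%:R <= M + 1 :> R).
  apply: le_trans (_ : (l q i - 1)%N%:R + 1 <= _); last by rewrite lerD2r.
  by rewrite -(natrD _ _ 1) ler_nat; lia.
have := le_ceil h2.
rewrite -[X in Num.ceil X]/((l q i)%:Z%:~R) intrKceil; exact.
Qed.
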